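(* Let $n\ge 2$, $T=n$, $I=J=\{1,\dots,n\}$, and $E=\{(i,1):i\in I\}\cup\{(j,j):j=2,\dots,n\}$. Then the clairvoyant optimum of IFM on this instance is at least $1-1/e$, while under RANKING the offline agent $1$ satisfies $\mathbb E[Z_1]=O(1/n)$. Hence RANKING has competitive ratio $0$ for IFM.
   Context: Model. An instance consists of a finite bipartite graph $(I,J,E)$, where $I$ is the set of offline agents and $J$ the set of online agent types, with $|J|=T$. For $j\in J$ let $\mathcal N_j=\{i\in I:(i,j)\in E\}$. There are $T$ rounds $t=1,\dots,T$; in each round exactly one online agent arrives, whose type is drawn uniformly at random from $J$ (each type with probability $1/T$), independently across rounds. Each offline agent can be matched at most once. When an online agent of type $j$ arrives, an online algorithm must immediately and irrevocably either reject it or match it to a currently unmatched $i\in\mathcal N_j$. Let $Z_i$ be the indicator that offline agent $i$ is matched by the end. IFM maximizes $\min_{i\in I}\mathbb E[Z_i]$. A clairvoyant policy observes the entire arrival sequence before choosing (possibly randomly) which arrivals to match to which compatible unmatched offline agents; the clairvoyant optimum is the supremum of $\min_i\mathbb E[Z_i]$ over clairvoyant policies. RANKING: before the online phase draw a uniformly random permutation $\pi$ of $I$; when an online agent of type $j$ arrives, match it to the currently unmatched neighbor of $j$ that comes earliest in $\pi$, or reject if none exists. *)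

(* Defs.v *)
From HB Require Import structures.
From mathcomp Require Import all_boot all_order all_fingroup all_algebra.
From mathcomp Require Import all_classical all_reals all_analysis.
Set Implicit Arguments. Unset Strict Implicit. Unset Printing Implicit Defensive.
Import Order.TTheory GRing.Theory Num.Theory.
Local Open Scope ring_scope.

(* An IFM instance: offline agents I = 'I_ni, online types J = 'I_nJ,
   edges given by adj j i (type j compatible with offline agent i),
   T rounds.  An arrival sequence is s : {ffun 'I_T -> 'I_nJ}
   (s t = type arriving in round t), uniformly distributed:
   each round's type is uniform on J, independently. *)

Definition seq_prob (R : realType) (nJ T : nat) : R := (nJ%:R)^-1 ^+ T.

(* A clairvoyant outcome: an assignment of rounds to offline agents
   (None = reject). *)
Definition feasible_assignment (ni nJ T : nat) (adj : 'I_nJ -> 'I_ni -> bool)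
    (s : {ffun 'I_T -> 'I_nJ}) (m : {ffun 'I_T -> option 'I_ni}) : Prop :=
  (forall t i, m t = Some i -> adj (s t) i) /\
  (forall t t' i, m t = Some i -> m t' = Some i -> t = t').

Definition matchedZ (R : realType) (ni T : nat)
    (m : {ffun 'I_T -> option 'I_ni}) (i : 'I_ni) : R :=
  if [exists t, m t == Some i] then 1 else 0.

Definition clair_policy (R : realType) (ni nJ T : nat) (adj : 'I_nJ -> 'I_ni -> bool)
    (pol : {ffun 'I_T -> 'I_nJ} -> {ffun 'I_T -> option 'I_ni} -> R) : Prop :=
  forall s, (forall m, 0 <= pol s m) /\
            \sum_(m : {ffun 'I_T -> option 'I_ni}) pol s m = 1 /\
            (forall m, pol s m != 0 -> feasible_assignment adj s m).

Definition clairEZ (R : realType) (ni nJ T : nat)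
    (pol : {ffun 'I_T -> 'I_nJ} -> {ffun 'I_T -> option 'I_ni} -> R) (i : 'I_ni) : R :=
  \sum_(s : {ffun 'I_T -> 'I_nJ})
     seq_prob R nJ T * \sum_(m : {ffun 'I_T -> option 'I_ni}) pol s m * matchedZ R m i.

(* min over offline agents (the default 1 is irrelevant for ni > 0, and
   all the E[Z_i] are <= 1 anyway) *)
Definition min_over (R : realType) (ni : nat) (f : 'I_ni -> R) : R :=
  \big[Order.min/1]_(i : 'I_ni) f i.

Definition clair_opt (R : realType) (ni nJ T : nat) (adj : 'I_nJ -> 'I_ni -> bool) : R :=
  sup [set x : R | exists pol : {ffun 'I_T -> 'I_nJ} -> {ffun 'I_T -> option 'I_ni} -> R,
                               clair_policy adj pol /\
                               x = min_over (clairEZ pol)].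

(* RANKING. A permutation pi : {perm 'I_ni} lists the offline agents:
   pi k is the agent at position k.  Agent i is "earlier" than i' iff it
   occurs at a smaller position. *)
Definition rank_cand (ni nJ : nat) (adj : 'I_nJ -> 'I_ni -> bool)
    (M : {set 'I_ni}) (j : 'I_nJ) (i : 'I_ni) : bool :=
  adj j i && (i \notin M).

Definition rank_choice (ni nJ : nat) (adj : 'I_nJ -> 'I_ni -> bool)
    (pi : {perm 'I_ni}) (M : {set 'I_ni}) (j : 'I_nJ) : option 'I_ni :=
  omap pi [pick k : 'I_ni | rank_cand adj M j (pi k) &&
             [forall k' : 'I_ni, (k' < k)%N ==> ~~ rank_cand adj M j (pi k')]].

Definition rank_step (ni nJ : nat) (adj : 'I_nJ -> 'I_ni -> bool)
    (pi : {perm 'I_ni}) (M : {set 'I_ni}) (j : 'I_nJ) : {set 'I_ni} :=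
  if rank_choice adj pi M j is Some i then i |: M else M.

Definition rank_matched (ni nJ T : nat) (adj : 'I_nJ -> 'I_ni -> bool)
    (s : {ffun 'I_T -> 'I_nJ}) (pi : {perm 'I_ni}) : {set 'I_ni} :=
  foldl (fun M t => rank_step adj pi M (s t)) (finset.set0 : {set 'I_ni}) (enum 'I_T).

Definition rankEZ (R : realType) (ni nJ T : nat) (adj : 'I_nJ -> 'I_ni -> bool)
    (i : 'I_ni) : R :=
  \sum_(s : {ffun 'I_T -> 'I_nJ}) \sum_(pi : {perm 'I_ni})
     seq_prob R nJ T * (#|{perm 'I_ni}|%:R)^-1 *
     (if i \in rank_matched adj s pi then 1 else 0).

Definition rank_obj (R : realType) (ni nJ T : nat) (adj : 'I_nJ -> 'I_ni -> bool) : R :=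
  min_over (rankEZ R T adj).

(* The instance of the theorem, 0-indexed: I = J = 'I_n, type 0 (paper's
   type 1) is adjacent to every offline agent; type j >= 1 is adjacent
   to offline agent j only. *)
Definition inst_adj (n : nat) (j i : 'I_n) : bool := (val j == 0%N) || (i == j).

(* Main.v *)
Require Import Defs.
From HB Require Import structures.
From mathcomp Require Import all_boot all_order all_fingroup all_algebra.
From mathcomp Require Import all_classical all_reals all_analysis.
From mathcomp Require Import ring lra zify.
Import Order.TTheory GRing.Theory Num.Theory.
Local Open Scope ring_scope.
Set Implicit Arguments. Unset Strict Implicit. Unset Printing Implicit Defensive.

Definition pos {n : nat} (pi : {perm 'I_n}) (x : 'I_n) : nat := nat_of_ord ((pi^-1)%g x).

Lemma rank_choiceP ni nJ (adj : 'I_nJ -> 'I_ni -> bool) pi M j i :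
  rank_choice adj pi M j = Some i ->
  rank_cand adj M j i /\ (forall k' : 'I_ni, (k' < (pi^-1)%g i)%N -> ~~ rank_cand adj M j (pi k')).
Proof.
rewrite /rank_choice; case: pickP => //= k /andP[Hk /forallP Hall] [<-].
split => // k'; rewrite permK => Hk'; exact: (implyP (Hall k') Hk').
Qed.

Section StepA.
Variables (n : nat) (a0 : 'I_n) (pi : {perm 'I_n}) (S : {set 'I_n}).
Hypothesis Ha0 : val a0 = 0%N.

Definition InvA (M : {set 'I_n}) (c : nat) :=
  (#|M :&: S| <= c)%N /\
  (forall x y, x \in M -> x \in S -> y \in S -> (pos pi y < pos pi x)%N -> y \in M).

Lemma invA_step M c j : (j != a0 -> j \notin S) -> InvA M c ->
  InvA (rank_step (@inst_adj n) pi M j) (c + (j == a0))%N.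
Proof.
move=> HjS [Hc Hp]; rewrite /rank_step.
case Hch: (rank_choice _ _ _ _) => [i|]; last first.
  by split=> //; apply: leq_trans Hc (leq_addr _ _).
have [/andP[Hadj HiM] Hmin] := rank_choiceP Hch.
have [Hj|Hj] := eqVneq j a0.
- subst j; split.
  + rewrite finset.setIUl addn1 cardsU (leq_trans (leq_subr _ _)) //.
    by rewrite -addn1 addnC leq_add // (leq_trans (subset_leq_card (subsetIl _ _))) ?cards1.
  + move=> x y; rewrite !inE => /orP[/eqP->|HxM] HxS HyS Hlt.
    * apply/orP; right.
      have := Hmin ((pi^-1)%g y) Hlt; rewrite permKV /rank_cand /inst_adj Ha0 eqxx /=.
      by rewrite negbK.
    * by apply/orP; right; apply: Hp HxM HxS HyS Hlt.
- have Hij : i = j.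
    by move: Hadj; rewrite /inst_adj; case/orP=> [/eqP Hv|/eqP //]; case/negP: Hj; apply/eqP/val_inj; rewrite /= Hv Ha0.
  subst i; have HjS' := HjS Hj.
  split.
  + rewrite addn0 finset.setIUl cardsU (leq_trans (leq_subr _ _)) //.
    have -> : [set j] :&: S = finset.set0.
      by apply/setP=> z; rewrite !inE; apply/negbTE; apply/andP=> [[/eqP-> H]]; rewrite H in HjS'.
    by rewrite cards0.
  + move=> x y; rewrite !inE => /orP[/eqP->|HxM] HxS HyS Hlt.
    * by rewrite HxS in HjS'.
    * by apply/orP; right; apply: Hp HxM HxS HyS Hlt.
Qed.

Lemma invA_fold l M c : (forall j, j \in l -> j != a0 -> j \notin S) -> InvA M c ->
  InvA (foldl (fun M j => rank_step (@inst_adj n) pi M j) M l) (c + count (pred1 a0) l)%N.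
Proof.
elim: l M c => [|j l IH] M c Hl HI /=; first by rewrite addn0.
rewrite addnA; apply: IH; first by move=> k Hk; apply: Hl; rewrite inE Hk orbT.
by apply: invA_step => //; apply: Hl; rewrite inE eqxx.
Qed.
End StepA.

Lemma stepA n (a0 : 'I_n) (pi : {perm 'I_n}) (js : seq 'I_n) :
  val a0 = 0%N ->
  a0 \in foldl (fun M j => rank_step (@inst_adj n) pi M j) finset.set0 js ->
  (#|[set y | ((y == a0) || (y \notin js)) & (pos pi y < pos pi a0)%N]| < count (pred1 a0) js)%N.
Proof.
move=> Ha0 Hin.
set S := [set i | (i == a0) || (i \notin js)].
have HI : InvA pi S finset.set0 0.
  by split; [rewrite finset.set0I cards0 | move=> x y; rewrite inE].
have HjsS : forall j, j \in js -> j != a0 -> j \notin S.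
  by move=> j Hj Hne; rewrite /S inE negb_or Hne negbK Hj.
have [Hc Hp] := invA_fold Ha0 HjsS HI.
rewrite add0n in Hc.
have Ha0S : a0 \in S by rewrite inE eqxx.
apply: leq_trans Hc.
have -> : [set y | ((y == a0) || (y \notin js)) & (pos pi y < pos pi a0)%N] =
          [set y in S | (pos pi y < pos pi a0)%N] by apply/setP=> y; rewrite !inE.
have Hnot : a0 \notin [set y in S | (pos pi y < pos pi a0)%N] by rewrite inE ltnn andbF.
have := cardsU1 a0 [set y in S | (pos pi y < pos pi a0)%N]; rewrite Hnot add1n => <-.
rewrite subset_leq_card //.
apply/fintype.subsetP=> y; rewrite !inE => /orP[/eqP->|/andP[HyS Hlt]].
  by rewrite Hin eqxx.
rewrite (Hp a0 y) //.
by move: HyS; rewrite inE.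
Qed.


Section StepB.
Variables (n : nat) (S : {set 'I_n}) (A : nat).
Definition cB (pi : {perm 'I_n}) (x : 'I_n) : bool :=
  (#|[set y in S | (pos pi y < pos pi x)%N]| < A)%N.

Lemma pos_inj (pi : {perm 'I_n}) : injective (pos pi).
Proof. by move=> x y /val_inj /perm_inj. Qed.

Lemma cB_bound pi : (#|[set x in S | cB pi x]| <= A)%N.
Proof.
set X := [set x in S | cB pi x].
have [->|[x0 Hx0]] := set_0Vmem X; first by rewrite cards0.
case: (@arg_maxnP _ x0 (mem X) (pos pi) Hx0) => xm HxmX Hmax.
have HX : X \subset xm |: [set y in S | (pos pi y < pos pi xm)%N].
  apply/fintype.subsetP=> x Hx; rewrite !inE.
  have [->|Hne] := eqVneq x xm; first by [].
  move: (Hx); rewrite inE => /andP[HxS _]; rewrite HxS /=.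
  rewrite ltn_neqAle; apply/andP; split; last exact: Hmax.
  by apply: contra Hne => /eqP /pos_inj ->.
apply: leq_trans (subset_leq_card HX) _.
have HxmX' : xm \in X := HxmX.
rewrite cardsU1; move: HxmX'; rewrite /X inE => /andP[_ Hc].
by apply: leq_trans (leq_add (leq_b1 _) (leqnn _)) _; rewrite add1n.
Qed.

Lemma cB_sym a0 x : a0 \in S -> x \in S ->
  #|[set pi | cB pi x]| = #|[set pi | cB pi a0]|.
Proof.
move=> Ha0 Hx; set t := tperm a0 x.
have HtS : forall y, (t y \in S) = (y \in S).
  move=> y; rewrite /t; case: tpermP => [->|->|//]; by rewrite ?Ha0 ?Hx.
have Hc : forall pi, cB (pi * t)%g a0 = cB pi x.
  move=> pi; rewrite /cB.
  have Hpos : forall y, pos (pi * t)%g y = pos pi (t y).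
    by move=> y; rewrite /pos invMg permM tpermV.
  have Hta : t a0 = x by rewrite /t tpermL.
  rewrite Hpos Hta.
  congr (_ < A)%N.
  rewrite -(card_preimset _ (@perm_inj _ t)).
  apply: eq_card => y; rewrite !inE -/t HtS Hpos.
  by rewrite /t tpermK.
rewrite -[RHS](card_preimset _ (mulIg t)).
by apply: eq_card => pi; rewrite !inE Hc.
Qed.

Lemma card_set_sum (T : finType) (P : pred T) : #|[set x | P x]| = (\sum_x (P x : nat))%N.
Proof. by rewrite -sum1_card big_mkcond; apply: eq_bigr => x _; rewrite inE; case: (P x). Qed.

Lemma stepB a0 : a0 \in S ->
  (#|S| * #|[set pi : {perm 'I_n} | cB pi a0]| <= n`! * A)%N.
Proof.
move=> Ha0.
have -> : (#|S| * #|[set pi | cB pi a0]| = \sum_(x in S) #|[set pi | cB pi x]|)%N.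
  rewrite -sum_nat_const; apply: eq_bigr => x Hx; by rewrite (cB_sym Ha0 Hx).
have -> : (\sum_(x in S) #|[set pi | cB pi x]| = \sum_(pi : {perm 'I_n}) #|[set x in S | cB pi x]|)%N.
  rewrite (eq_bigr (fun x => \sum_(pi : {perm 'I_n}) (cB pi x : nat))%N); last by move=> x _; rewrite card_set_sum.
  rewrite exchange_big; apply: eq_bigr => pi _.
  rewrite card_set_sum big_mkcond; apply: eq_bigr => x _.
  by case: (x \in S).
rewrite -card_Sn -sum_nat_const.
by apply: leq_sum => pi _; apply: cB_bound.
Qed.
End StepB.


Lemma foldr_prod (T : finType) (g : T -> nat) :
  foldr muln 1%N [seq g x | x : T] = (\prod_x g x)%N.
Proof.
have H : forall l, foldr muln 1%N (map g l) = (\prod_(x <- l) g x)%N.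
  by elim=> [|a l IH]; rewrite ?big_nil ?big_cons //= IH.
by rewrite H big_enum.
Qed.

Lemma count_fam n (t a0 : 'I_n) (D : {set 'I_n}) : a0 \notin D ->
  #|[set s : {ffun 'I_n -> 'I_n} | (s t == a0) && [forall t', s t' \notin D]]| = ((n - #|D|) ^ n.-1)%N.
Proof.
move=> Ha0.
pose F := fun x : 'I_n => if x == t then pred1 a0 else [pred y : 'I_n | y \notin D].
have -> : #|[set s : {ffun 'I_n -> 'I_n} | (s t == a0) && [forall t', s t' \notin D]]| = #|family F|.
  apply: eq_card => s; rewrite inE; apply/andP/familyP.
    move=> [/eqP Hst /fintype.forallP Hall] x; rewrite /F; case: eqP => [->|_]; rewrite inE ?Hst //.
  move=> Hf; have := Hf t; rewrite /F eqxx inE => Ht; split => //.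
  apply/fintype.forallP => x; have := Hf x; rewrite /F; case: eqP => [->|_]; rewrite inE //.
  by move/eqP->.
rewrite card_family foldr_prod (bigD1 t) //= {1}/F eqxx card1 mul1n.
rewrite (eq_bigr (fun _ => n - #|D|)%N); last first.
  move=> x /negbTE Hx; rewrite /F Hx.
  have HC := cardC D; rewrite card_ord in HC.
  rewrite -[X in (X - _)%N]HC addKn.
  by apply: eq_card => y; rewrite !inE.
by rewrite prod_nat_const cardC1 card_ord.
Qed.


Lemma inv_bound (R : realType) (mu h : R) : 0 < mu -> 1 <= h ->
  h^-1 <= 2 / mu + 4 * (h - 1 - mu)^+2 / mu^+2.
Proof.
move=> Hmu Hh.
set u := mu^-1.
have Hu : 0 < u by rewrite invr_gt0.
have Hmuu : mu * u = 1 by rewrite mulfV // gt_eqF.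
have -> : 2 / mu + 4 * (h - 1 - mu)^+2 / mu^+2 = 2 * u + 4 * (h - 1 - mu)^+2 * (u * u).
  by rewrite /u -exprVn expr2 mulrA.
set r := 2 * u + _.
have Hh0 : 0 < h by lra.
have Hr0 : 0 <= r by rewrite /r; apply: addr_ge0; [lra| apply: mulr_ge0; [apply: mulr_ge0; [lra|apply: sqr_ge0]|nra]].
have Hhr : 1 <= h * r.
  have [Hc|Hc] := lerP (mu / 2) (h - 1).
  - have : 1 <= h * (2 * u) by nra.
    have : 0 <= h * (4 * (h - 1 - mu) ^+ 2 * (u * u)) by apply: mulr_ge0; [lra|apply: mulr_ge0; [apply: mulr_ge0; [lra|apply: sqr_ge0]|nra]].
    rewrite /r; lra.
  - have Hd : mu / 2 < mu - (h - 1) by lra.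
    have Hd2 : mu * mu / 4 <= (h - 1 - mu)^+2.
      rewrite expr2; nra.
    have : 1 <= 4 * (h - 1 - mu) ^+ 2 * (u * u).
      have : mu * mu * (u * u) = 1 by rewrite mulrACA Hmuu mul1r.
      nra.
    have : 0 <= 2 * u by lra.
    rewrite /r; nra.
rewrite -[h^-1]mulr1; apply: le_trans (ler_wpM2l _ Hhr) _.
  by rewrite invr_ge0; lra.
by rewrite mulrA mulVf ?mul1r // gt_eqF.
Qed.


Lemma sumR_card (R : realType) (T : finType) (P : pred T) :
  \sum_x (P x)%:R = (#|[set x | P x]|)%:R :> R.
Proof. by rewrite card_set_sum natr_sum. Qed.

Section Moments.
Variables (R : realType) (n : nat) (a0 t : 'I_n).

Definition Xi (s : {ffun 'I_n -> 'I_n}) (i : 'I_n) : bool := [forall t', s t' != i].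
Definition gs (s : {ffun 'I_n -> 'I_n}) : R := \sum_(i | i != a0) (Xi s i)%:R.
Definition wt (s : {ffun 'I_n -> 'I_n}) : R := (s t == a0)%:R.

Lemma sum_fam (D : {set 'I_n}) : a0 \notin D ->
  \sum_(s : {ffun 'I_n -> 'I_n}) ((s t == a0) && [forall t', s t' \notin D])%:R
   = ((n - #|D|) ^ n.-1)%:R :> R.
Proof. by move=> HD; rewrite sumR_card count_fam. Qed.

Lemma W0 : \sum_s wt s = (n ^ n.-1)%:R.
Proof.
transitivity (\sum_(s : {ffun 'I_n -> 'I_n}) ((s t == a0) && [forall t', s t' \notin (finset.set0 : {set 'I_n})])%:R : R).
  apply: eq_bigr => s _.
  suff -> : [forall t', s t' \notin (finset.set0 : {set 'I_n})] by rewrite andbT.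
  by apply/fintype.forallP => x; rewrite inE.
by rewrite sum_fam ?inE // cards0 subn0.
Qed.

Lemma card_neq : #|[pred i : 'I_n | i != a0]| = n.-1.
Proof. have := cardC1 a0; rewrite card_ord => <-; by apply: eq_card => i; rewrite !inE. Qed.

Lemma Xi2 s i j : (Xi s i && Xi s j) = [forall t', s t' \notin [set i; j]].
Proof.
apply/andP/fintype.forallP.
  by move=> [/fintype.forallP H1 /fintype.forallP H2] x; rewrite !inE negb_or H1 H2.
move=> H; split; apply/fintype.forallP => x; have := H x; rewrite !inE negb_or => /andP[] //.
Qed.

Lemma W1 : \sum_s wt s * gs s = (n.-1 * n.-1 ^ n.-1)%:R.
Proof.
transitivity (\sum_(i | i != a0) \sum_(s : {ffun 'I_n -> 'I_n}) ((s t == a0) && [forall t', s t' \notin [set i]])%:R : R).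
  rewrite exchange_big; apply: eq_bigr => s _; rewrite /gs mulr_sumr; apply: eq_bigr => i _.
  rewrite /wt -natrM mulnb; congr ((_ && _)%:R).
  by rewrite -[Xi s i]andbb Xi2 finset.setUid.
rewrite (eq_bigr (fun _ => (n.-1 ^ n.-1)%:R)); last first.
  by move=> i Hi; rewrite sum_fam ?inE 1?eq_sym // cards1 subn1.
by rewrite sumr_const card_neq natrM mulrC mulr_natr.
Qed.

Lemma card_neq2 i : i != a0 -> #|[pred j : 'I_n | (j != a0) && (j != i)]| = (n - 2)%N.
Proof.
move=> Hi.
have HC := cardC [set a0; i]; rewrite card_ord cards2 eq_sym Hi in HC.
rewrite -[X in (X - _)%N]HC addKn.
by apply: eq_card => j; rewrite !inE negb_or.
Qed.

Lemma inner2 i : i != a0 ->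
  \sum_(j | j != a0) ((n - #|[set i; j]|) ^ n.-1)%:R
    = (n.-1 ^ n.-1 + (n - 2) * (n - 2) ^ n.-1)%:R :> R.
Proof.
move=> Hi; rewrite (bigD1 i) //= finset.setUid cards1 subn1 natrD.
congr (_ + _).
rewrite (eq_bigr (fun _ => ((n - 2) ^ n.-1)%:R)); last first.
  by move=> j /andP[_ Hj]; rewrite cards2 eq_sym Hj.
by rewrite sumr_const card_neq2 // natrM mulrC mulr_natr.
Qed.

Lemma W2 : \sum_s wt s * gs s ^+ 2 = (n.-1 * (n.-1 ^ n.-1 + (n - 2) * (n - 2) ^ n.-1))%:R.
Proof.
transitivity (\sum_(s : {ffun 'I_n -> 'I_n}) \sum_(i | i != a0) \sum_(j | j != a0) ((s t == a0) && [forall t', s t' \notin [set i; j]])%:R : R).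
  apply: eq_bigr => s _; rewrite /gs expr2 mulr_suml mulr_sumr; apply: eq_bigr => i _.
  rewrite mulr_sumr mulr_sumr; apply: eq_bigr => j _.
  by rewrite /wt mulrA -!natrM !mulnb -andbA Xi2.
rewrite exchange_big; under eq_bigr => i _ do rewrite exchange_big.
rewrite (eq_bigr (fun _ => (n.-1 ^ n.-1 + (n - 2) * (n - 2) ^ n.-1)%:R)); last first.
  move=> i Hi; rewrite -(inner2 Hi); apply: eq_bigr => j Hj; rewrite sum_fam //.
  by rewrite !inE negb_or !(eq_sym a0) Hi Hj.
by rewrite sumr_const card_neq natrM mulrC mulr_natr.
Qed.
End Moments.


Lemma leq_pow a b k : (a <= b)%N -> (a ^ k <= b ^ k)%N.
Proof. by case: k => [//|k] Hab; rewrite leq_exp2r. Qed.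


Lemma nat_ineq m : (m * ((m - 1) * (m - 1) ^ m) * m.+1 ^ m <= m ^ m.+1 * m ^ m.+1)%N.
Proof.
have -> : (m * ((m - 1) * (m - 1) ^ m) * m.+1 ^ m = (m * (m - 1)) * ((m - 1) * m.+1) ^ m)%N.
  by rewrite expnMn; ring.
have -> : (m ^ m.+1 * m ^ m.+1 = (m * m) * (m * m) ^ m)%N.
  by rewrite expnMn !expnS; ring.
apply: leq_mul; first by nia.
by apply: leq_pow; nia.
Qed.

Section Var.
Variables (R : realType) (n : nat) (a0 t : 'I_n).
Hypothesis Hn : (0 < n)%N.
Definition mu : R := (n.-1 ^ n)%:R / (n ^ n.-1)%:R.

Lemma var_t : \sum_s wt R a0 t s * (gs R a0 s - mu)^+2 <= (n.-1 ^ n)%:R.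
Proof.
have -> : \sum_s wt R a0 t s * (gs R a0 s - mu)^+2 =
   \sum_s wt R a0 t s * gs R a0 s ^+ 2 - 2 * mu * \sum_s wt R a0 t s * gs R a0 s + mu^+2 * \sum_s wt R a0 t s.
  rewrite !mulr_sumr -sumrB -big_split /=; apply: eq_bigr => s _; ring.
rewrite W2 W1 W0 /mu.
have HK : 0 < (n ^ n.-1)%:R :> R by rewrite ltr0n expn_gt0 Hn.
case: n Hn a0 t HK => [//|m] _ _ _ HK /=.
rewrite -[(m * m ^ m)%N]expnS.
set Mn := (m ^ m.+1)%:R : R.
set K := (m.+1 ^ m)%:R : R.
have -> : (m * (m ^ m + (m.+1 - 2) * (m.+1 - 2) ^ m))%:R = Mn + (m * ((m - 1) * (m - 1) ^ m))%:R :> R.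
  by rewrite /Mn mulnDr natrD expnS subSS subn1 -subn1.
set Z := (m * ((m - 1) * (m - 1) ^ m))%:R : R.
have HZK : Z * K <= Mn * Mn by rewrite /Z /K /Mn -!natrM ler_nat nat_ineq.
have HKne : K != 0 by rewrite gt_eqF.
have -> : Mn + Z - 2 * (Mn / K) * Mn + (Mn / K) ^+ 2 * K = Mn + Z - Mn * Mn / K.
  by field.
have : Z <= Mn * Mn / K by rewrite ler_pdivlMr.
lra.
Qed.
End Var.


Section StepC.
Variables (R : realType) (m : nat) (a0 : 'I_m.+1).
Let n := m.+1.
Definition Pn : R := (n%:R)^-1 ^+ n.
Definition qn : R := Pn * (m ^ n)%:R.
Definition As (s : {ffun 'I_n -> 'I_n}) : R := \sum_t wt R a0 t s.

Lemma Pn_gt0 : 0 < Pn.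
Proof. by rewrite /Pn exprn_gt0 // invr_gt0 ltr0n. Qed.

Lemma Pn_ge0 : 0 <= Pn.
Proof. exact: ltW Pn_gt0. Qed.

Lemma Pn_nn : Pn * (n ^ n)%:R = 1.
Proof. by rewrite /Pn natrX -exprMn mulVf ?expr1n // pnatr_eq0. Qed.

Lemma mu_eq : mu R n = n%:R * qn.
Proof.
rewrite /mu /qn /Pn /n /= exprVn !natrX.
have H : (m.+1%:R : R) != 0 by rewrite pnatr_eq0.
rewrite (exprS (m.+1%:R : R) m) invfM; field.
by rewrite expf_neq0 // -(natrD _ 1 m) pnatr_eq0.
Qed.

Lemma qn_gt0 : (0 < m)%N -> 0 < qn.
Proof. by move=> Hm; rewrite /qn mulr_gt0 ?Pn_gt0 // ltr0n expn_gt0 Hm. Qed.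

Lemma sum_As : \sum_s Pn * As s = 1.
Proof.
rewrite -mulr_sumr /As exchange_big /=.
rewrite (eq_bigr (fun _ => (n ^ n.-1)%:R)); last by move=> t _; rewrite W0.
by rewrite sumr_const card_ord -mulrnA -expnSr Pn_nn.
Qed.

Lemma sum_As_var : \sum_s Pn * As s * (gs R a0 s - mu R n)^+2 <= n%:R * qn.
Proof.
rewrite (eq_bigr (fun s => Pn * \sum_t wt R a0 t s * (gs R a0 s - mu R n)^+2)); last first.
  by move=> s _; rewrite /As -mulrA mulr_suml.
rewrite -mulr_sumr exchange_big /= /qn mulrCA ler_wpM2l ?Pn_ge0 //.
apply: (@le_trans _ _ (\sum_(t < m.+1) ((m ^ n)%:R : R))).
  by apply: ler_sum => t _; apply: var_t.
by rewrite sumr_const card_ord mulr_natl.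
Qed.

Lemma stepC : (0 < m)%N ->
  \sum_s Pn * (As s / (1 + gs R a0 s)) <= 6 / (n%:R * qn).
Proof.
move=> Hm.
have Hmu : 0 < mu R n by rewrite mu_eq mulr_gt0 ?qn_gt0 // ltr0n.
have Hgs : forall s, 0 <= gs R a0 s by move=> s; apply: sumr_ge0 => i _; apply: ler0n.
have HAs : forall s, 0 <= As s by move=> s; apply: sumr_ge0 => i _; apply: ler0n.
apply: (@le_trans _ _ (\sum_s (Pn * As s * (2 / mu R n) + Pn * As s * (gs R a0 s - mu R n)^+2 * (4 / (mu R n)^+2)))).
  apply: ler_sum => s _.
  have Hh : 1 <= 1 + gs R a0 s by rewrite lerDl.
  have H := inv_bound Hmu Hh.
  have E1 : 1 + gs R a0 s - 1 = gs R a0 s by rewrite addrAC subrr add0r.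
  rewrite E1 in H.
  have H2 : As s / (1 + gs R a0 s) <= As s * (2 / mu R n + 4 * (gs R a0 s - mu R n) ^+ 2 / mu R n ^+ 2).
    by rewrite ler_wpM2l.
  have E2 : Pn * (As s * (2 / mu R n + 4 * (gs R a0 s - mu R n) ^+ 2 / mu R n ^+ 2)) =
    Pn * As s * (2 / mu R n) + Pn * As s * (gs R a0 s - mu R n) ^+ 2 * (4 / mu R n ^+ 2) by ring.
  rewrite -E2; apply: ler_wpM2l => //; exact: Pn_ge0.
rewrite big_split /= -!mulr_suml sum_As mul1r.
apply: (@le_trans _ _ (2 / mu R n + n%:R * qn * (4 / mu R n ^+ 2))).
  by rewrite lerD2l ler_wpM2r ?sum_As_var // divr_ge0 // exprn_ge0 // ltW.
rewrite mu_eq.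
have Hq := qn_gt0 Hm.
have Hn0 : (n%:R : R) != 0 by rewrite pnatr_eq0.
rewrite le_eqVlt; apply/orP; left; apply/eqP; field.
by rewrite Hn0 gt_eqF.
Qed.
End StepC.


Lemma foldl_mapT (T1 T2 U : Type) (f : U -> T2 -> U) (g : T1 -> T2) (l : seq T1) u :
  foldl (fun M t => f M (g t)) u l = foldl f u (map g l).
Proof. by elim: l u => //= a l IH u; rewrite IH. Qed.

Lemma count_sumn (T : eqType) (P : pred T) (l : seq T) :
  count P l = (\sum_(x <- l) (P x : nat))%N.
Proof. by elim: l => [|a l IH]; rewrite ?big_nil ?big_cons //= IH. Qed.

Lemma mem_map_enum n (s : {ffun 'I_n -> 'I_n}) y :
  (y \notin map s (enum 'I_n)) = Xi s y.
Proof.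
apply/idP/fintype.forallP.
  move=> H t; apply: contra H => /eqP <-; exact: map_f (mem_enum _ _).
move=> H; apply/mapP => [[t _ Ht]]; have := H t; by rewrite Ht eqxx.
Qed.

Section Conn.
Variables (R : realType) (m : nat) (a0 : 'I_m.+1).
Let n := m.+1.

Lemma count_As (s : {ffun 'I_n -> 'I_n}) :
  (count (pred1 a0) (map s (enum 'I_n)))%:R = As R a0 s.
Proof.
rewrite count_map count_sumn natr_sum big_enum /As; apply: eq_bigr => t _.
by rewrite /wt.
Qed.

Lemma card_S (s : {ffun 'I_n -> 'I_n}) :
  (#|[set y | (y == a0) || (y \notin map s (enum 'I_n))]|)%:R = 1 + gs R a0 s.
Proof.
rewrite -(sumR_card R (fun y => (y == a0) || (y \notin map s (enum 'I_n)))).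
rewrite (bigD1 a0) //= eqxx /=; congr (_ + _).
by apply: eq_bigr => y /negbTE Hy; rewrite Hy /= mem_map_enum.
Qed.

Lemma rank_bound (Ha0 : val a0 = 0%N) :
  rankEZ R n (@inst_adj n) a0 <= \sum_s Pn R m * (As R a0 s / (1 + gs R a0 s)).
Proof.
rewrite /rankEZ; apply: ler_sum => s _.
set js := map s (enum 'I_n).
set S := [set y | (y == a0) || (y \notin js)].
set A := count (pred1 a0) js.
have HF : 0 < (#|{perm 'I_n}|%:R : R) by rewrite ltr0n card_Sn fact_gt0.
have Hsp : seq_prob R n n = Pn R m by [].
rewrite Hsp -mulr_sumr.
apply: (@le_trans _ _ (Pn R m * (#|{perm 'I_n}|%:R)^-1 * (#|[set pi | cB S A pi a0]|)%:R)).
  apply: ler_wpM2l; first by rewrite mulr_ge0 ?Pn_ge0 // invr_ge0 ltW.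
  rewrite -sumR_card; apply: ler_sum => pi _.
  rewrite /rank_matched foldl_mapT.
  case: ifP => Hin; last by case: (cB _ _ _ _).
  have H := stepA Ha0 Hin.
  rewrite /cB (_ : [set y in S | _] = [set y | ((y == a0) || (y \notin js)) & (pos pi y < pos pi a0)%N]); last by apply/setP => y; rewrite !inE.
  by rewrite H.
rewrite -mulrA ler_wpM2l ?Pn_ge0 //.
have HS0 : 0 < (#|S|%:R : R).
  by rewrite ltr0n; apply/card_gt0P; exists a0; rewrite inE eqxx.
rewrite -card_S -count_As -/js -/S -/A.
rewrite ler_pdivlMr // -mulrA mulrC ler_pdivrMr //.
rewrite -!natrM ler_nat card_Sn mulnC [(A * _)%N]mulnC.
by apply: stepB; rewrite inE eqxx.
Qed.
End Conn.


Section Q.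
Variables (R : realType) (m : nat).

Lemma qn_eq : qn R m = (m%:R / m.+1%:R)^+ m.+1.
Proof. by rewrite /qn /Pn natrX -exprMn mulrC. Qed.

Lemma qn_le : qn R m <= expR (-1).
Proof.
rewrite qn_eq.
have Hn : 0 < (m.+1%:R : R) by rewrite ltr0n.
have E : m%:R / m.+1%:R = 1 + (- (m.+1%:R)^-1) :> R.
  rewrite -natr1; field; by rewrite natr1 gt_eqF.
have E2 : expR (-1) = expR (- (m.+1%:R)^-1) ^+ m.+1 :> R.
  by rewrite -expRM_natr mulNr mulVf ?gt_eqF.
rewrite E E2; apply: lerXn2r; rewrite ?inE ?expR_ge0 //.
  by rewrite nnegrE subr_ge0 invf_le1 // ler1n.
  by rewrite nnegrE expR_ge0.
exact: expR_ge1Dx.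
Qed.

Lemma qn_ge : (0 < m)%N -> expR (-1) / 2 <= qn R m.
Proof.
move=> Hm; rewrite qn_eq exprS.
have Hm0 : 0 < (m%:R : R) by rewrite ltr0n.
have Hn : 0 < (m.+1%:R : R) by rewrite ltr0n.
have H1 : 1/2 <= m%:R / m.+1%:R :> R.
  rewrite ler_pdivlMr // -[m.+1%:R]natr1; have : 1 <= (m%:R : R) by rewrite ler1n.
  lra.
have H2 : expR (-1) <= (m%:R / m.+1%:R) ^+ m :> R.
  have E : m.+1%:R / m%:R = 1 + (m%:R)^-1 :> R.
    rewrite -[m.+1%:R]natr1; field; by rewrite gt_eqF.
  have Hle : (m.+1%:R / m%:R) ^+ m <= expR 1 :> R.
    have E2 : expR 1 = expR ((m%:R)^-1) ^+ m :> R.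
      by rewrite -expRM_natr mulVf ?gt_eqF.
    rewrite E E2; apply: lerXn2r; rewrite ?inE ?expR_ge0 //.
      by rewrite nnegrE addr_ge0 // invr_ge0 ltW.
      by rewrite nnegrE expR_ge0.
    exact: expR_ge1Dx.
  have Hpos : 0 < (m.+1%:R / m%:R) ^+ m :> R by rewrite exprn_gt0 // divr_gt0.
  have -> : (m%:R / m.+1%:R) ^+ m = ((m.+1%:R / m%:R) ^+ m)^-1 :> R.
    by rewrite -exprVn invf_div.
  rewrite expRN lef_pV2 ?posrE ?expR_gt0 //.
have H0 : 0 <= expR (-1) :> R by rewrite expR_ge0.
have H3 : 0 <= m%:R / m.+1%:R :> R by rewrite divr_ge0 ?ltW.
move: H1 H2 H3; set a := m%:R / m.+1%:R => H1 H2 H3.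
have P1 : 0 <= (a - 1/2) * expR (-1) :> R by apply: mulr_ge0 => //; lra.
have P2 : 0 <= a * (a ^+ m - expR (-1)) :> R by apply: mulr_ge0 => //; lra.
lra.
Qed.
End Q.


Section P1.
Variables (R : realType) (m : nat).
Let n := m.+1.

Definition ms (s : {ffun 'I_n -> 'I_n}) : {ffun 'I_n -> option 'I_n} :=
  [ffun t : 'I_n => if [forall t' : 'I_n, (t' < t)%N ==> (s t' != s t)] then Some (s t) else None].

Definition polc (s : {ffun 'I_n -> 'I_n}) (mm : {ffun 'I_n -> option 'I_n}) : R :=
  (mm == ms s)%:R.

Lemma ms_some s t i : ms s t = Some i -> i = s t /\ forall t' : 'I_n, (t' < t)%N -> s t' != s t.
Proof.
rewrite /ms ffunE; case: ifP => // /fintype.forallP H [<-]; split => // t' Ht'.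
exact: (implyP (H t') Ht').
Qed.

Lemma polc_policy : clair_policy (@inst_adj n) polc.
Proof.
move=> s; split; first by move=> mm; rewrite /polc ler0n.
split.
  rewrite (bigD1 (ms s)) //= /polc eqxx big1 ?addr0 // => mm /negbTE -> //.
move=> mm; rewrite /polc pnatr_eq0 eqb0 negbK => /eqP ->; split.
  move=> t i /ms_some [-> _]; by rewrite /inst_adj eqxx orbT.
move=> t t' i /ms_some [Hi Ht] /ms_some [Hi' Ht'].
have Hs : s t = s t' by rewrite -Hi -Hi'.
apply: val_inj; case: (ltngtP t t') => // H.
  by have := Ht' t H; rewrite Hs eqxx.
by have := Ht t' H; rewrite Hs eqxx.
Qed.

Lemma matched_ms s i : matchedZ R (ms s) i = (~~ Xi s i)%:R.
Proof.
have E : [exists t, ms s t == Some i] = ~~ Xi s i.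
  apply/idP/idP.
    case/existsP => t /eqP /ms_some [Hi _]; apply/negP => /fintype.forallP /(_ t).
    by rewrite Hi eqxx.
  rewrite /Xi negb_forall => /existsP [t1]; rewrite negbK => Ht1.
  case: (@arg_minnP _ t1 (fun t => s t == i) (fun t : 'I_n => nat_of_ord t) Ht1) => t0 /eqP Ht0 Hmin.
  apply/existsP; exists t0; rewrite /ms ffunE.
  suff -> : [forall t' : 'I_n, (t' < t0)%N ==> (s t' != s t0)] by rewrite Ht0.
  apply/fintype.forallP => t'; apply/implyP => Hlt; apply/negP => /eqP Hst'.
  have := Hmin t'; rewrite Hst' Ht0 eqxx => /(_ isT); by rewrite leqNgt Hlt.
by rewrite /matchedZ E; case: (~~ _).
Qed.

Lemma card_Xi i : #|[set s : {ffun 'I_n -> 'I_n} | Xi s i]| = (m ^ n)%N.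
Proof.
have -> : #|[set s : {ffun 'I_n -> 'I_n} | Xi s i]| = #|ffun_on_mem 'I_n (mem (predC1 i))|.
  apply: eq_card => s; rewrite inE; apply/fintype.forallP/ffun_onP => H x; have := H x; by rewrite !inE.
by rewrite card_ffun_on cardC1 !card_ord.
Qed.

Lemma clairEZ_polc i : clairEZ polc i = 1 - qn R m.
Proof.
rewrite /clairEZ.
rewrite (eq_bigr (fun s => Pn R m * (~~ Xi s i)%:R)); last first.
  move=> s _; congr (_ * _).
  rewrite (bigD1 (ms s)) //= /polc eqxx mul1r matched_ms big1 ?addr0 // => mm /negbTE ->.
  by rewrite mul0r.
rewrite -mulr_sumr.
rewrite (eq_bigr (fun s => 1 - (Xi s i)%:R)); last by move=> s _; case: (Xi s i); rewrite ?subrr ?subr0.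
rewrite sumrB sumr_const sumR_card card_Xi card_ffun !card_ord.
by rewrite mulrBr Pn_nn.
Qed.

Lemma part1 : 1 - expR (-1) <= clair_opt R n (@inst_adj n).
Proof.
apply: (@le_trans _ _ (min_over (clairEZ polc))).
  apply: le_bigmin; first by rewrite lerBlDr lerDl expR_ge0.
  by move=> i _; rewrite clairEZ_polc lerB // qn_le.
apply: ub_le_sup.
  exists 1 => x [pol [_ ->]]; exact: bigmin_le_id.
by exists polc; split => //; exact: polc_policy.
Qed.
End P1.


Unset Implicit Arguments.
Lemma part2 (R : realType) (m : nat) : (0 < m)%N -> forall i1 : 'I_m.+1, val i1 = 0%N ->
  rankEZ R m.+1 (@inst_adj m.+1) i1 <= (12 / expR (-1)) / m.+1%:R.
Proof.
move=> Hm i1 Hi1.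
apply: le_trans (rank_bound R Hi1) _.
apply: le_trans (stepC R i1 Hm) _.
have He : 0 < expR (-1) :> R by rewrite expR_gt0.
have Hq := qn_ge R Hm.
have Hq0 : 0 < qn R m by apply: lt_le_trans Hq; rewrite divr_gt0.
have Hn : 0 < (m.+1%:R : R) by rewrite ltr0n.
have Hqi : (qn R m)^-1 <= 2 / expR (-1).
  by rewrite -invf_div lef_pV2 ?posrE ?divr_gt0.
have -> : 6 / (m.+1%:R * qn R m) = 6 / m.+1%:R * (qn R m)^-1 by rewrite invfM mulrA.
have -> : 12 / expR (-1) / m.+1%:R = 6 / m.+1%:R * (2 / expR (-1)) :> R.
  by field; rewrite (gt_eqF He) /= -(natrD R 1 m) pnatr_eq0.
by apply: ler_wpM2l => //; rewrite divr_ge0 // ltW.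
Qed.

Theorem mainTheorem4 (R : realType) :
  (forall n : nat, (2 <= n)%N ->
     1 - expR (-1) <= clair_opt R n (@inst_adj n))
  /\
  (exists C : R, exists N : nat, forall n : nat, (2 <= n)%N -> (N <= n)%N ->
     forall i1 : 'I_n, val i1 = 0%N ->
       rankEZ R n (@inst_adj n) i1 <= C / n%:R)
  /\
  (forall eps : R, 0 < eps ->
     exists (ni nJ : nat) (adj : 'I_nJ -> 'I_ni -> bool),
       rank_obj R nJ adj < eps * clair_opt R nJ adj).
Proof.
split.
  by move=> [|m] // _; exact: part1.
split.
  exists (12 / expR (-1)), 0%N => -[|m] // Hm _ i1 Hi1.
  by apply: part2.
move=> eps Heps.
set C := 12 / expR (-1) : R.
set c1 := 1 - expR (-1) : R.
have Hc1 : 0 < c1 by rewrite /c1 subr_gt0 expR_lt1 ltrN10.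
have HC : 0 <= C by rewrite /C divr_ge0 // expR_ge0.
set k := Num.Def.archi_bound (C / (eps * c1)).
have Hk : C / (eps * c1) < k%:R by apply: archi_boundP; rewrite divr_ge0 // ltW // mulr_gt0.
exists k.+2, k.+2, (@inst_adj k.+2).
have H0 : val (ord0 : 'I_k.+2) = 0%N by [].
apply: (@le_lt_trans _ _ (C / k.+2%:R)).
  apply: (le_trans _ (part2 R k.+1 (ltn0Sn k) ord0 H0)).
  exact: bigmin_le.
apply: (@lt_le_trans _ _ (eps * c1)).
  have Hn : 0 < (k.+2%:R : R) by rewrite ltr0n.
  rewrite ltr_pdivrMr //.
  have Hec : 0 < eps * c1 by rewrite mulr_gt0.
  move: Hk; rewrite ltr_pdivrMr // => Hk.
  apply: lt_le_trans Hk _.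
  rewrite mulrC; apply: ler_wpM2l; [exact: ltW | rewrite ler_nat; apply: leq_trans (leqnSn k) (leqnSn k.+1)].
apply: ler_wpM2l; first exact: ltW.
exact: part1.
Qed.
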